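(* Let $s,k$ be integers such that $s$ is prime and $2 \le k \le s$. Then \[ A(sk, 2k-2, k) ~\ge~ s^2 + k\cdot A(s, 2k-2, k). \]
   Context: $A(n,d,w)$ denotes the maximum number of binary words of length $n$ and Hamming weight $w$ that are pairwise at Hamming distance at least $d$; equivalently $A(n,2k-2,k)$ is the maximum number of pairwise edge-disjoint copies of $K_k$ in the complete graph $K_n$. *)

(* Defs.v *)
From mathcomp Require Import all_boot.
Set Implicit Arguments. Unset Strict Implicit. Unset Printing Implicit Defensive.

Definition weight (n : nat) (x : {ffun 'I_n -> bool}) : nat :=
  #|[set i | x i]|.

Definition hdist (n : nat) (x y : {ffun 'I_n -> bool}) : nat :=
  #|[set i | x i != y i]|.

Definition cw_code (n d w : nat) (C : {set {ffun 'I_n -> bool}}) : bool :=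
  [forall x in C, weight x == w] &&
  [forall x in C, forall y in C, (x != y) ==> (d <= hdist x y)].

Definition A (n d w : nat) : nat :=
  \max_(C : {set {ffun 'I_n -> bool}} | cw_code d w C) #|C|.

(* Main.v *)
Require Import Defs.
From mathcomp Require Import all_boot zify.
Set Implicit Arguments. Unset Strict Implicit. Unset Printing Implicit Defensive.

Definition inter n (x y : {ffun 'I_n -> bool}) := #|[set i | x i && y i]|.

Lemma card_sum n (P : 'I_n -> bool) : #|[set i | P i]| = \sum_i (P i : nat).
Proof.
rewrite -sum1_card big_mkcond /=; apply: eq_bigr => i _; rewrite inE; by case: (P i).
Qed.

Lemma hdist_inter n (x y : {ffun 'I_n -> bool}) :
  hdist x y + 2 * inter x y = weight x + weight y.
Proof.
rewrite /hdist /inter /weight !card_sum big_distrr -!big_split /=.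
apply: eq_bigr => i _; by case: (x i); case: (y i).
Qed.

Lemma inter_sym n (x y : {ffun 'I_n -> bool}) : inter x y = inter y x.
Proof. rewrite /inter; apply: eq_card => i; by rewrite !inE andbC. Qed.

Lemma inter_self n (x : {ffun 'I_n -> bool}) : inter x x = weight x.
Proof. rewrite /inter /weight; apply: eq_card => i; by rewrite !inE andbb. Qed.

Lemma code_inter n k (C : {set {ffun 'I_n -> bool}}) x y : 1 <= k -> cw_code (2 * k - 2) k C -> x \in C -> y \in C -> x != y ->
  inter x y <= 1.
Proof.
move=> k1 /andP[/forall_inP W /forall_inP D] xC yC xy.
have := D x xC => /forall_inP /(_ y yC) /implyP /(_ xy).
have := hdist_inter x y; rewrite (eqP (W x xC)) (eqP (W y yC)). lia.
Qed.

Lemma inter_code n k (C : {set {ffun 'I_n -> bool}}) : 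
  {in C, forall x, weight x = k} ->
  {in C &, forall x y, x != y -> inter x y <= 1} -> cw_code (2 * k - 2) k C.
Proof.
move=> W D; apply/andP; split; apply/forall_inP => x xC.
  by rewrite W.
apply/forall_inP => y yC; apply/implyP => xy.
have := D x y xC yC xy; have := hdist_inter x y; rewrite !W //. lia.
Qed.

Lemma key_cancel s b b' d : prime s -> b < s -> b' < s -> 0 < d < s ->
  b * d = b' * d %[mod s] -> b = b'.
Proof.
move=> ps; wlog le: b b' / b' <= b => [hw|].
  case: (leqP b' b) => h; first exact: hw.
  move=> h1 h2 h3 h4; apply/esym; apply: (hw b' b) => //; first exact: ltnW.
move=> bs b's /andP[d0 ds] /eqP; rewrite eqn_mod_dvd ?leq_mul2r ?le ?orbT // -mulnBl.
rewrite Euclid_dvdM // => /orP[H|H].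
  have: b - b' = 0.
    case E: (b - b') => [//|m]; move: H; rewrite E => /dvdn_leq; lia.
  lia.
have := dvdn_leq d0 H; lia.
Qed.

Lemma key s a b a' b' j j' : prime s -> a < s -> b < s -> a' < s -> b' < s -> j' < s -> j <= j' ->
  a + b * j = a' + b' * j %[mod s] -> a + b * j' = a' + b' * j' %[mod s] ->
  j = j' \/ (a = a' /\ b = b').
Proof.
move=> ps ha bs a's b's j's le H1 H2.
case: (ltngtP j j') => [lt||->]; [|lia|by left].
right. have Ed : j' = j + (j' - j) by lia.
move: H2; rewrite Ed !mulnDr !addnA -modnDml H1 modnDml => /eqP; rewrite eqn_modDl => /eqP H.
have bb : b = b' by apply: (key_cancel ps bs b's _ H); lia.
split=> //; move: H1; subst b' => /eqP; rewrite eqn_modDr !modn_small // => /eqP //.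
Qed.

Definition T s k (a b : nat) : {ffun 'I_(s * k) -> bool} :=
  [ffun i : 'I_(s * k) => i %% s == (a + b * (i %/ s)) %% s].
Definition E s k (j : nat) (c : {ffun 'I_s -> bool}) : {ffun 'I_(s * k) -> bool} :=
  [ffun i : 'I_(s * k) => (i %/ s == j) && [exists t : 'I_s, (val t == i %% s) && c t]].

Arguments T : clear implicits.
Arguments E : clear implicits.

Lemma lt_idx s k x j : x < s -> j < k -> j * s + x < s * k.
Proof. move=> h1 h2; nia. Qed.

Lemma idx_div s x j : x < s -> (j * s + x) %/ s = j.
Proof. move=> h; rewrite divnMDl ?divn_small ?addn0 //; lia. Qed.

Lemma idx_mod s x j : x < s -> (j * s + x) %% s = x.
Proof. move=> h; by rewrite modnMDl modn_small. Qed.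

Lemma eq_idx s n (i i' : 'I_n) : i %/ s = i' %/ s -> i %% s = i' %% s -> i = i'.
Proof. move=> h1 h2; apply: val_inj => /=; by rewrite (divn_eq i s) (divn_eq i' s) h1 h2. Qed.

Lemma div_lt s k (i : 'I_(s * k)) : 0 < s -> i %/ s < k.
Proof. move=> sp; rewrite ltn_divLR //; have := ltn_ord i; lia. Qed.

Lemma weight_T s k a b : 0 < s -> weight (T s k a b) = k.
Proof.
move=> sp; rewrite /weight.
pose f := fun j : 'I_k => Ordinal (lt_idx (ltn_pmod (a + b * j) sp) (ltn_ord j)).
have -> : [set i | T s k a b i] = f @: setT.
  apply/setP => i; rewrite inE ffunE; apply/idP/imsetP.
  - move/eqP => H.
    have jk : i %/ s < k by apply: div_lt.
    exists (Ordinal jk) => //; apply: val_inj => /=.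
    by rewrite {1}(divn_eq i s) H.
  - case=> j _ -> /=; by rewrite idx_div ?ltn_pmod // idx_mod ?ltn_pmod // modn_mod.
rewrite card_imset ?cardsT ?card_ord // => j j' /(congr1 (fun i : 'I_(s * k) => val i %/ s)) /=.
by rewrite !idx_div ?ltn_pmod // => /val_inj.
Qed.

Lemma weight_E s k j c : 0 < s -> j < k -> weight (E s k j c) = weight c.
Proof.
move=> sp jk; rewrite /weight.
pose f := fun t : 'I_s => Ordinal (lt_idx (ltn_ord t) jk) : 'I_(s * k).
have -> : [set i | E s k j c i] = f @: [set t | c t].
  apply/setP => i; rewrite inE ffunE; apply/idP/imsetP.
  - case/andP => /eqP H /existsP [t /andP[/eqP Ht ct]].
    exists t; first by rewrite inE.
    apply: val_inj => /=; by rewrite {1}(divn_eq i s) H Ht.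
  - case=> t; rewrite inE => ct -> /=; rewrite idx_div // idx_mod // eqxx /=.
    apply/existsP; exists t; by rewrite eqxx.
rewrite card_imset // => t t' /(congr1 (fun i : 'I_(s * k) => val i)) /= /eqP.
by rewrite eqn_add2l => /eqP /val_inj.
Qed.

Lemma inter_TT s k a b a' b' : prime s -> k <= s -> a < s -> b < s -> a' < s -> b' < s ->
  (a, b) != (a', b') -> inter (T s k a b) (T s k a' b') <= 1.
Proof.
move=> ps ks ha hb ha' hb' ne; have sp := prime_gt0 ps.
apply/card_le1_eqP => i i'; rewrite !inE !ffunE => /andP[/eqP H1 /eqP H2] /andP[/eqP H3 /eqP H4].
have lti : forall x : 'I_(s * k), x %/ s < s.
  move=> x; have : x %/ s < k by apply: div_lt.
  lia.
have Hq : i' %/ s = i %/ s.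
  case: (leqP (i' %/ s) (i %/ s)) => le.
  - have := key ps ha hb ha' hb' (lti i) le.
    rewrite -H1 -H2 -H3 -H4 => /(_ erefl erefl) [//|[e1 e2]].
    by move: ne; rewrite e1 e2 eqxx.
  - have := key ps ha hb ha' hb' (lti i') (ltnW le).
    rewrite -H1 -H2 -H3 -H4 => /(_ erefl erefl) [//|[e1 e2]].
    by move: ne; rewrite e1 e2 eqxx.
apply: (eq_idx Hq); by rewrite H3 H1 Hq.
Qed.

Lemma inter_TE s k a b j c : 0 < s -> inter (T s k a b) (E s k j c) <= 1.
Proof.
move=> sp; apply/card_le1_eqP => i i'; rewrite !inE !ffunE.
case/andP => /eqP H1 /andP[/eqP H2 _] /andP[/eqP H3 /andP[/eqP H4 _]].
have Hq : i' %/ s = i %/ s by rewrite H2 H4.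
apply: (eq_idx Hq); by rewrite H3 H1 Hq.
Qed.

Lemma inter_EE s k j j' c c' : 0 < s -> (j != j') || (inter c c' <= 1) ->
  inter (E s k j c) (E s k j' c') <= 1.
Proof.
move=> sp H; apply/card_le1_eqP => i i'; rewrite !inE !ffunE.
case/andP => /andP[/eqP H1 /existsP[t /andP[/eqP Ht ct]]] /andP[/eqP H2 /existsP[t2 /andP[/eqP Ht2 ct2]]].
case/andP => /andP[/eqP H3 /existsP[u /andP[/eqP Hu cu]]] /andP[/eqP H4 /existsP[u2 /andP[/eqP Hu2 cu2]]].
have jj : j = j' by rewrite -H1 H2.
move: H; rewrite jj eqxx /= => /card_le1_eqP H.
have tt2 : t = t2 by apply: val_inj; rewrite Ht Ht2.
have uu2 : u = u2 by apply: val_inj; rewrite Hu Hu2.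
subst t2 u2.
have tu : u = t by apply: H; rewrite inE ?ct ?ct2 ?cu ?cu2.
apply: (@eq_idx s); first by rewrite H1 H3.
by rewrite -Hu -Ht tu.
Qed.

Lemma neq_of_inter n (x y : {ffun 'I_n -> bool}) : 2 <= weight x -> inter x y <= 1 -> x != y.
Proof. move=> w i; apply/negP => /eqP e; move: i; rewrite e inter_self -e; lia. Qed.

Lemma inter_TT' s k (p q : 'I_s * 'I_s) : prime s -> k <= s -> p != q ->
  inter (T s k p.1 p.2) (T s k q.1 q.2) <= 1.
Proof.
move=> ps ks ne; apply: inter_TT => //.
Qed.

Lemma inter_EE' s k C0 (p q : 'I_k * {ffun 'I_s -> bool}) : 0 < s -> 1 <= k ->
  cw_code (2 * k - 2) k C0 -> p.2 \in C0 -> q.2 \in C0 -> p != q ->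
  inter (E s k p.1 p.2) (E s k q.1 q.2) <= 1.
Proof.
move=> sp k1 cC pC qC ne; apply: inter_EE => //.
case: (boolP (val p.1 == val q.1)) => //= /eqP /val_inj e.
apply: (code_inter k1 cC pC qC).
apply/negP => /eqP e2; move: ne; case: p e e2 pC => a b; case: q qC => a' b' /= _ -> -> ? ne.
by rewrite eqxx in ne.
Qed.

Theorem lemma2 (s k : nat) :
  prime s -> 2 <= k -> k <= s ->
  s ^ 2 + k * A s (2 * k - 2) k <= A (s * k) (2 * k - 2) k.
Proof.
move=> ps k2 ks; have sp := prime_gt0 ps; have k1 : 1 <= k by lia.
have ne : 0 < #|[pred C : {set {ffun 'I_s -> bool}} | cw_code (2 * k - 2) k C]|.
  apply/card_gt0P; exists set0; rewrite inE /cw_code.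
  by apply/andP; split; apply/forall_inP => x; rewrite in_set0.
have [C0 C0c C0m] := eq_bigmax_cond (fun C : {set {ffun 'I_s -> bool}} => #|C|) ne.
have HA : A s (2 * k - 2) k = #|C0| by rewrite -C0m.
rewrite inE in C0c.
rewrite HA.
pose C1 := (fun p : 'I_s * 'I_s => T s k p.1 p.2) @: [set: 'I_s * 'I_s].
pose C2 := (fun p : 'I_k * {ffun 'I_s -> bool} => E s k p.1 p.2) @: setX [set: 'I_k] C0.
have W0 : {in C0, forall c, weight c = k}.
  by move=> c cC; case/andP: C0c => /forall_inP W _; rewrite (eqP (W c cC)).
have WC : {in C1 :|: C2, forall x, weight x = k}.
  move=> x; case/setUP => /imsetP [p pin ->].
    exact: weight_T.
  move: pin; rewrite inE => /andP[_ pC]; rewrite weight_E ?W0 //.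
have IC : {in C1 :|: C2 &, forall x y, x != y -> inter x y <= 1}.
  move=> x y; case/setUP => /imsetP [p pin ->]; case/setUP => /imsetP [q qin ->] xy.
  - apply: inter_TT' => //; apply/negP => /eqP e; by rewrite e eqxx in xy.
  - exact: inter_TE.
  - rewrite inter_sym; exact: inter_TE.
  - move: pin; rewrite inE => /andP[_ pC]; move: qin; rewrite inE => /andP[_ qC].
    apply: (inter_EE' sp k1 C0c pC qC); apply/negP => /eqP e; by rewrite e eqxx in xy.
have code : cw_code (2 * k - 2) k (C1 :|: C2) by apply: inter_code.
have W2 : forall x, x \in C1 :|: C2 -> 2 <= weight x by move=> x /WC ->.
rewrite /A; apply: (leq_trans _ (@leq_bigmax_cond _ (fun C => cw_code (2 * k - 2) k C) (fun C => #|C|) _ code)).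
rewrite cardsU.
have -> : C1 :&: C2 = set0.
  apply/setP => x; rewrite !inE; apply/negP => /andP[x1 x2].
  have : x \in C1 :|: C2 by rewrite inE x1.
  case/imsetP: x1 => p _ e1; case/imsetP: x2 => q _ e2.
  move/W2; rewrite {1}e1 => w; have := neq_of_inter w (@inter_TE s k p.1 p.2 q.1 q.2 sp).
  by rewrite -e1 -e2 eqxx.
rewrite cards0 subn0.
rewrite card_imset ?cardsT ?card_prod ?card_ord; last first.
  move=> p q e; apply/eqP; apply/negP => /negP pq.
  have := neq_of_inter _ (inter_TT' ps ks pq); rewrite e eqxx weight_T //; lia.
rewrite card_in_imset ?cardsX ?cardsT ?card_ord; first by rewrite mulnn.
move=> p q pin qin e; apply/eqP; apply/negP => /negP pq.
move: pin; rewrite inE => /andP[_ pC]; move: qin; rewrite inE => /andP[_ qC].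
have := neq_of_inter _ (inter_EE' sp k1 C0c pC qC pq); rewrite e eqxx weight_E ?W0 //; lia.
Qed.
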